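(* Under the standing assumptions described in the context (including (H4)–(H8)), for every $k=0,\dots,N$: $$|\sigma^*_{k+1}|\le H^2h^2,\qquad |\sigma_{k+1}|\le \tfrac12 H^2h^2,\qquad |\tau_{k+1}|\le \tfrac12H^2h^2+\tfrac12K_2H^3h^3.$$
   Context: Let $T>0$ and let $g:[0,T]\to[0,\infty)$ be increasing, left-continuous, continuous at $0$, with a finite set $D_g\subset(0,T)$ of discontinuity points; $\Delta^+\varphi(t)=\varphi(t^+)-\varphi(t)$; $g^B(t)=\sum_{s\in[0,t)}\Delta^+g(s)$, $g^C=g-g^B$; $\mu_g$ is the Lebesgue–Stieltjes measure with $\mu_g([c,d))=g(d)-g(c)$. For $u:[0,T]\to\mathbb R$ the Stieltjes derivative at $t$ is $u'_g(t)=\lim_{s\to t}\frac{u(s)-u(t)}{g(s)-g(t)}$ if $t\notin D_g$ and $u'_g(t)=\frac{u(t^+)-u(t)}{\Delta^+g(t)}$ if $t\in D_g$. Let $f:[0,T]\times\mathbb R\to\mathbb R$, $x_0\in\mathbb R$, and let $x$ be the solution of $x'_g(t)=f(t,x(t))$ for $\mu_g$-a.e. $t\in[0,T)$, $x(0)=x_0$; it satisfies $x(t)=x_0+\int_{[0,t)}f(s,x(s))\,\mathrm d\mu_g(s)$ for all $t\in[0,T]$. Put $f_*(x)(t)=f(t,x(t))$, $f_*^B(x)(t)=\sum_{s\in[0,t)}\Delta^+f_*(x)(s)$, $f_*^C(x)=f_*(x)-f_*^B(x)$. A function $u$ is $g$-Lipschitz with constant $H$ if $|u(t)-u(s)|\le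 H|g(t)-g(s)|$ for all $t,s$; $g$-continuous means: for every $t_0$ and $\epsilon>0$ there is $\delta>0$ with $|g(t)-g(t_0)|<\delta\Rightarrow|u(t)-u(t_0)|<\epsilon$. Hypotheses: (H4) $0=t_0<t_1<\dots<t_{N+1}=T$ with $t_{k+1}-t_k=h>0$ for all $k$, and $D_g\subset\{t_k\}$; $K_1=\max\{\Delta^+g(d):d\in D_g\}$. (H5) $f_*(x)$ is $g$-Lipschitz with constant $H>0$, and $f_*^C(x)$ and $g^C$ are Lipschitz with constant $H$. (H6) for every $c\in\mathbb R$, $f(\cdot,c)$ is bounded and $g$-continuous on $[0,T]$. (H7) for every $t$, $f(t,\cdot)\in C^1(\mathbb R)$ and $|\partial_x f(t,x)|<K_2$ for all $(t,x)$. (H8) for every $t\in[0,T)$ and $c$, the right limit $f(t^+,c)=\lim_{s\to t^+}f(s,c)$ exists, $f(t^+,\cdot)\in C^1(\mathbb R)$ and $|\partial_x f(t^+,x)|<K_3$ for all $(t,x)$. Notation: $x_k=x(t_k)$, $x_k^+=x(t_k^+)$. Local errors, $k=0,\dots,N$: $\sigma^*_{k+1}=x_{k+1}-x_k^+-f(t_k^+,x_k^+)(g(t_{k+1})-g(t_k^+))$; $\sigma_{k+1}=x_{k+1}-x_k^+-\tfrac12(f(t_k^+,x_k^+)+f(t_{k+1},x_{k+1}))(g(t_{k+1})-g(t_k^+))$; $x^*_{k+1}=x_{k+1}-\sigma^*_{k+1}$; $\tau_{k+1}=x_{k+1}-x_k^+-\tfrac12(f(t_k^+,x_k^+)+f(t_{k+1},x^*_{k+1}))(g(t_{k+1})-g(t_k^+))$.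 *)

(* Defs.v *)
From Stdlib Require Import Reals Lra List ClassicalEpsilon.
Open Scope R_scope.

(** Right limit of phi at t (as a relation), and its value (chosen by epsilon;
    meaningful only when the limit exists). *)
Definition is_rlim (phi : R -> R) (t l : R) : Prop :=
  forall eps, 0 < eps -> exists delta, 0 < delta /\
    forall s, t < s < t + delta -> Rabs (phi s - l) < eps.

Definition rlim (phi : R -> R) (t : R) : R :=
  epsilon (inhabits 0) (fun l => is_rlim phi t l).

Definition jump (phi : R -> R) (t : R) : R := rlim phi t - phi t.

Definition fsum (L : list R) (a : R -> R) : R :=
  fold_right (fun s acc => a s + acc) 0 L.

Definition is_jump_sum (phi : R -> R) (t S : R) : Prop :=
  exists L : list R, NoDup L /\
    (forall s, In s L <-> (0 <= s < t /\ jump phi s <> 0)) /\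
    S = fsum L (jump phi).

Definition jump_part (phi : R -> R) (t : R) : R :=
  epsilon (inhabits 0) (fun S => is_jump_sum phi t S).
Definition cont_part (phi : R -> R) (t : R) : R := phi t - jump_part phi t.

Definition cont_in (T : R) (u : R -> R) (t : R) : Prop :=
  forall eps, 0 < eps -> exists delta, 0 < delta /\
    forall s, 0 <= s <= T -> Rabs (s - t) < delta -> Rabs (u s - u t) < eps.

Definition Dg (T : R) (g : R -> R) (t : R) : Prop :=
  0 <= t <= T /\ ~ cont_in T g t.

Definition left_cont_on (T : R) (g : R -> R) : Prop :=
  forall t, 0 < t <= T -> forall eps, 0 < eps -> exists delta, 0 < delta /\
    forall s, 0 <= s -> t - delta < s <= t -> Rabs (g s - g t) < eps.

Definition g_lipschitz (T : R) (g u : R -> R) (L : R) : Prop :=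
  forall t s, 0 <= t <= T -> 0 <= s <= T -> Rabs (u t - u s) <= L * Rabs (g t - g s).

Definition lipschitz (T : R) (u : R -> R) (L : R) : Prop :=
  forall t s, 0 <= t <= T -> 0 <= s <= T -> Rabs (u t - u s) <= L * Rabs (t - s).

Definition g_cont (T : R) (g u : R -> R) : Prop :=
  forall t0, 0 <= t0 <= T -> forall eps, 0 < eps -> exists delta, 0 < delta /\
    forall t, 0 <= t <= T -> Rabs (g t - g t0) < delta -> Rabs (u t - u t0) < eps.

Definition has_gderiv (T : R) (g u : R -> R) (t l : R) : Prop :=
  (Dg T g t -> exists ur, is_rlim u t ur /\ l = (ur - u t) / jump g t) /\
  (~ Dg T g t -> forall eps, 0 < eps -> exists delta, 0 < delta /\
     forall s, 0 <= s <= T -> Rabs (s - t) < delta -> g s <> g t ->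
       Rabs ((u s - u t) / (g s - g t) - l) < eps).

(** mu_g-null subsets of [0,T): outer measure zero w.r.t. covers by
    intervals [c,d) in [0,T], with mu_g([c,d)) = g(d) - g(c). *)
Definition g_null (T : R) (g : R -> R) (Nset : R -> Prop) : Prop :=
  forall eps, 0 < eps -> exists c d : nat -> R,
    (forall n, 0 <= c n /\ c n <= d n /\ d n <= T) /\
    (forall t, Nset t -> exists n, c n <= t < d n) /\
    (forall m, sum_f_R0 (fun n => g (d n) - g (c n)) m <= eps).

(** finite families of pairwise disjoint intervals (a_j,b_j) in [lo,T],
    listed in increasing order *)
Fixpoint intervals_ok (T lo : R) (l : list (R * R)) : Prop :=
  match l with
  | nil => True
  | (a, b) :: r => lo <= a /\ a < b /\ b <= T /\ intervals_ok T b r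
  end.

Definition sum_incr (u : R -> R) (l : list (R * R)) : R :=
  fold_right (fun p acc => (u (snd p) - u (fst p)) + acc) 0 l.
Definition sum_abs_incr (u : R -> R) (l : list (R * R)) : R :=
  fold_right (fun p acc => Rabs (u (snd p) - u (fst p)) + acc) 0 l.

Definition g_AC (T : R) (g u : R -> R) : Prop :=
  forall eps, 0 < eps -> exists delta, 0 < delta /\
    forall l, intervals_ok T 0 l -> sum_incr g l < delta -> sum_abs_incr u l < eps.

Definition is_g_solution (T : R) (g : R -> R) (f : R -> R -> R) (x0 : R)
  (x : R -> R) : Prop :=
  x 0 = x0 /\ g_AC T g x /\
  exists Nset, g_null T g Nset /\
    forall t, 0 <= t < T -> ~ Nset t -> has_gderiv T g x t (f t (x t)).

(* Main.v *)
Require Import Defs.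
From Stdlib Require Import Reals Lra List ClassicalEpsilon.
From Stdlib Require Import Lia ZArith Permutation Classical Bool FinFun.
Open Scope R_scope.


Ltac rabs := unfold Rabs in *; repeat match goal with |- context [Rcase_abs ?x] => destruct (Rcase_abs x) | H : context [Rcase_abs ?x] |- _ => destruct (Rcase_abs x) end.

Lemma rlim_unique phi t l1 l2 : is_rlim phi t l1 -> is_rlim phi t l2 -> l1 = l2.
Proof.
  intros H1 H2. destruct (Req_dec l1 l2) as [|Hne]; auto.
  assert (He : 0 < Rabs (l1 - l2) / 2).
  { assert (0 < Rabs (l1 - l2)) by (apply Rabs_pos_lt; lra). lra. }
  destruct (H1 _ He) as [d1 [Hd1 P1]]. destruct (H2 _ He) as [d2 [Hd2 P2]].
  set (s := t + Rmin d1 d2 / 2).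
  assert (Hm : 0 < Rmin d1 d2) by (apply Rmin_pos; auto).
  assert (Hm1 := Rmin_l d1 d2). assert (Hm2 := Rmin_r d1 d2).
  specialize (P1 s ltac:(unfold s; lra)). specialize (P2 s ltac:(unfold s; lra)).
  revert P1 P2. generalize (phi s). intros y P1 P2. exfalso. revert P1 P2. rabs; lra.
Qed.

Lemma rlim_eq phi t l : is_rlim phi t l -> rlim phi t = l.
Proof.
  intro H. unfold rlim. apply (rlim_unique phi t); auto.
  apply epsilon_spec. exists l; exact H.
Qed.

Lemma nat_large (r : R) : exists n : nat, r < INR n.
Proof.
  destruct (archimed r) as [H _]. destruct (Z_le_gt_dec 0 (up r)) as [z|z].
  - exists (Z.to_nat (up r)). rewrite INR_IZR_INZ, Z2Nat.id; [lra|lia].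
  - exists 0%nat. simpl. apply Z.gt_lt in z. apply IZR_lt in z. lra.
Qed.

Lemma rcauchy_lim u t :
  (forall e, 0 < e -> exists eta, 0 < eta /\ forall s s', t < s < t + eta -> t < s' < t + eta -> Rabs (u s - u s') < e) ->
  exists l, is_rlim u t l.
Proof.
  intro C.
  set (w := fun n : nat => u (t + / (INR n + 1))).
  assert (Hpos : forall n : nat, 0 < / (INR n + 1)).
  { intro n. apply Rinv_0_lt_compat. generalize (pos_INR n); lra. }
  assert (Hsmall : forall eta, 0 < eta -> exists N, forall n, (n >= N)%nat -> / (INR n + 1) < eta).
  { intros eta He. destruct (nat_large (/ eta)) as [N HN]. exists N. intros n Hn.
    apply le_INR in Hn. rewrite <- (Rinv_inv eta). apply Rinv_lt_contravar.
    - apply Rmult_lt_0_compat. apply Rinv_0_lt_compat; auto. generalize (pos_INR n); lra.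
    - lra. }
  assert (Cw : Cauchy_crit w).
  { intros e He. destruct (C e He) as [eta [Heta P]]. destruct (Hsmall eta Heta) as [N HN].
    exists N. intros n m Hn Hm. unfold Rdist, w. apply P.
    - specialize (HN n Hn). specialize (Hpos n). lra.
    - specialize (HN m Hm). specialize (Hpos m). lra. }
  destruct (R_complete w Cw) as [l Hl]. exists l.
  intros e He. destruct (C (e/2) ltac:(lra)) as [eta [Heta P]].
  exists eta. split; auto. intros s Hs.
  destruct (Hsmall eta Heta) as [N1 HN1]. destruct (Hl (e/2) ltac:(lra)) as [N2 HN2].
  specialize (HN1 (N1 + N2)%nat ltac:(lia)). specialize (HN2 (N1 + N2)%nat ltac:(lia)).
  specialize (Hpos (N1+N2)%nat).
  specialize (P s (t + / (INR (N1 + N2) + 1)) Hs ltac:(lra)).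
  unfold Rdist, w in HN2. revert P HN2. generalize (u s) (u (t + / (INR (N1 + N2) + 1))).
  intros a b. rabs; lra.
Qed.

Lemma mono_rlim (T : R) (g : R -> R) t :
  0 <= t < T -> (forall s u, 0 <= s -> s <= u -> u <= T -> g s <= g u) ->
  exists L, is_rlim g t L /\ g t <= L /\ (forall s, t < s <= T -> L <= g s).
Proof.
  intros Ht Hg.
  set (E := fun y => exists s, t < s <= T /\ y = - g s).
  assert (Hb : bound E).
  { exists (- g t). intros y [s [Hs ->]]. assert (g t <= g s) by (apply Hg; lra). lra. }
  assert (Hne : exists y, E y) by (exists (- g T); exists T; split; [lra|auto]).
  destruct (completeness E Hb Hne) as [m [Hub Hlub]].
  exists (- m). split; [|split].
  - intros e He.
    destruct (Classical_Prop.classic (exists s, t < s <= T /\ - g s > m - e)) as [[s [Hs Hgs]]|Hn].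
    + exists (s - t). split; [lra|]. intros s' Hs'.
      assert (g s' <= g s) by (apply Hg; lra).
      assert (- g s' <= m) by (apply Hub; exists s'; split; [lra|auto]).
      rabs; lra.
    + exfalso. assert (m <= m - e); [|lra]. apply Hlub. intros y [s [Hs ->]].
      apply Rnot_gt_le. intro Hc. apply Hn. exists s; auto.
  - assert (m <= - g t); [|lra]. apply Hlub. intros y [s [Hs ->]].
    assert (g t <= g s) by (apply Hg; lra). lra.
  - intros s Hs. assert (- g s <= m) by (apply Hub; exists s; split; [lra|auto]). lra.
Qed.


Fixpoint chain (dl : R -> R) (a b : R) (l : list (R*R*R)) : Prop :=
  match l with
  | nil => a = b
  | (p,t,q) :: r => p = a /\ p <= t <= q /\ p < q /\ t - dl t < p /\ q < t + dl t /\ chain dl q b r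
  end.

Lemma chain_app dl a s l t q : chain dl a s l -> s <= t <= q -> s < q -> t - dl t < s -> q < t + dl t ->
  chain dl a q (l ++ (s,t,q)::nil).
Proof.
  revert a. induction l as [|[[p0 t0] q0] r IH]; intros a Hc H1 H2 H3 H4; simpl in *.
  - subst. repeat split; lra.
  - destruct Hc as [? [? [? [? [? Hc]]]]]. split; [auto|]. split; [tauto|]. do 3 (split; [lra|]). apply IH; auto.
Qed.

Lemma cousin dl a b : a <= b -> (forall t, a <= t <= b -> 0 < dl t) -> exists l, chain dl a b l.
Proof.
  intros Hab Hdl.
  set (E := fun s => a <= s <= b /\ exists l, chain dl a s l).
  assert (Hb : bound E) by (exists b; intros y [Hy _]; lra).
  assert (Hne : exists y, E y) by (exists a; split; [lra| exists nil; reflexivity]).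
  destruct (completeness E Hb Hne) as [m [Hub Hlub]].
  assert (Ham : a <= m) by (apply Hub; split; [lra|exists nil; reflexivity]).
  assert (Hmb : m <= b) by (apply Hlub; intros y [Hy _]; lra).
  assert (Hd := Hdl m ltac:(lra)).
  assert (Hm : E m).
  { destruct (classic (exists s, E s /\ m - dl m < s)) as [[s [[Hs [l Hl]] Hs2]]|Hn].
    - assert (s <= m) by (apply Hub; split; [lra|exists l; auto]).
      destruct (Rle_lt_or_eq_dec s m H) as [Hlt| ->]; [|split; [lra|exists l; auto]].
      split; [lra|]. exists (l ++ (s,m,m)::nil). apply chain_app; auto; lra.
    - exfalso. assert (m <= m - dl m); [|lra]. apply Hlub. intros y Hy.
      apply Rnot_gt_le. intro Hc. apply Hn. exists y; split; auto; lra. }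
  destruct (Req_dec m b) as [<-|Hne2].
  - destruct Hm as [_ [l Hl]]. exists l; auto.
  - exfalso. destruct Hm as [_ [l Hl]].
    assert (Hq1 := Rmin_l b (m + dl m / 2)). assert (Hq2 := Rmin_r b (m + dl m / 2)).
    set (q := Rmin b (m + dl m / 2)) in *.
    assert (m < q) by (unfold q; apply Rmin_glb_lt; lra).
    assert (q <= m); [|lra]. apply Hub. split; [lra|]. exists (l ++ (m,m,q)::nil).
    apply chain_app; auto; lra.
Qed.

Definition sumL (F : R -> R -> R -> R) (L : list (R*R*R)) : R :=
  fold_right (fun x acc => F (fst (fst x)) (snd (fst x)) (snd x) + acc) 0 L.

Lemma sumL_filter_split F f L :
  sumL F L = sumL F (filter f L) + sumL F (filter (fun x => negb (f x)) L).
Proof.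
  induction L as [|x r IH]; simpl; [lra|]. destruct (f x); simpl; rewrite IH; lra.
Qed.

Lemma sumL_le F1 F2 L : (forall x, In x L -> F1 (fst (fst x)) (snd (fst x)) (snd x) <= F2 (fst (fst x)) (snd (fst x)) (snd x)) ->
  sumL F1 L <= sumL F2 L.
Proof.
  induction L as [|x r IH]; intro H; simpl; [lra|].
  apply Rplus_le_compat; [apply H; left; auto | apply IH; intros; apply H; right; auto].
Qed.

Lemma sumL_filter_le F f L : (forall x, In x L -> 0 <= F (fst (fst x)) (snd (fst x)) (snd x)) ->
  sumL F (filter f L) <= sumL F L.
Proof.
  intro H. rewrite (sumL_filter_split F f L) at 1.
  assert (0 <= sumL F (filter (fun x => negb (f x)) L)); [|lra].
  assert (H2 : forall x, In x (filter (fun x => negb (f x)) L) -> 0 <= F (fst (fst x)) (snd (fst x)) (snd x)).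
  { intros x Hx. apply filter_In in Hx. apply H; tauto. }
  revert H2. generalize (filter (fun x => negb (f x)) L). intro L'.
  induction L' as [|x r IH]; intro H2; simpl; [lra|].
  assert (0 <= F (fst (fst x)) (snd (fst x)) (snd x)) by (apply H2; left; auto).
  assert (0 <= sumL F r) by (apply IH; intros; apply H2; right; auto). lra.
Qed.

Lemma sumL_scal c F L : sumL (fun p t q => c * F p t q) L = c * sumL F L.
Proof. induction L as [|x r IH]; simpl; [lra|]. rewrite IH; lra. Qed.

Lemma chain_tele dl (g : R -> R) a b L : chain dl a b L -> sumL (fun p t q => g q - g p) L = g b - g a.
Proof.
  revert a; induction L as [|[[p t] q] r IH]; intros a Hc; simpl in *.
  - subst; lra.
  - destruct Hc as [-> [_ [_ [_ [_ Hc]]]]]. rewrite (IH q Hc). lra.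
Qed.

Lemma chain_tele_abs dl (v : R -> R) a b L : chain dl a b L -> Rabs (v b - v a) <= sumL (fun p t q => Rabs (v q - v p)) L.
Proof.
  revert a; induction L as [|[[p t] q] r IH]; intros a Hc; simpl in *.
  - subst. unfold Rminus. rewrite Rplus_opp_r, Rabs_R0. lra.
  - destruct Hc as [-> [_ [_ [_ [_ Hc]]]]]. specialize (IH q Hc).
    replace (v b - v a) with ((v q - v a) + (v b - v q)) by ring.
    eapply Rle_trans; [apply Rabs_triang|]. lra.
Qed.

Lemma chain_bounds dl a b L : chain dl a b L -> a <= b /\ forall x, In x L ->
  let p := fst (fst x) in let t := snd (fst x) in let q := snd x in
  a <= p /\ p <= t /\ t <= q /\ p < q /\ q <= b /\ t - dl t < p /\ q < t + dl t.
Proof.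
  revert a; induction L as [|[[p t] q] r IH]; intros a Hc; simpl in *.
  - subst; split; [lra| tauto].
  - destruct Hc as [-> [? [? [? [? Hc]]]]]. destruct (IH q Hc) as [Hqb IH2]. split; [lra|].
    intros x [<-|Hx]; simpl; [repeat split; lra|].
    destruct (IH2 x Hx) as [? [? [? [? [? [? ?]]]]]]. repeat split; lra.
Qed.

Fixpoint srt (L : list (R*R*R)) : Prop :=
  match L with
  | nil => True
  | x :: r => fst (fst x) < snd x /\ (forall y, In y r -> snd x <= fst (fst y)) /\ srt r
  end.

Lemma chain_srt dl a b L : chain dl a b L -> srt L.
Proof.
  revert a; induction L as [|[[p t] q] r IH]; intros a Hc; simpl in *; auto.
  destruct Hc as [-> [? [? [? [? Hc]]]]]. split; [lra|split; [|eapply IH; eauto]].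
  intros y Hy. destruct (chain_bounds _ _ _ _ Hc) as [_ HB]. apply (HB y Hy).
Qed.

Lemma srt_filter f L : srt L -> srt (filter f L).
Proof.
  induction L as [|x r IH]; simpl; auto. intros [H1 [H2 H3]].
  destruct (f x); simpl; auto. split; auto. split; auto.
  intros y Hy. apply filter_In in Hy. apply H2; tauto.
Qed.

Lemma srt_tele (T : R) (g : R -> R) L al om :
  (forall s u, 0 <= s -> s <= u -> u <= T -> g s <= g u) -> 0 <= al -> al <= om -> om <= T ->
  srt L -> (forall x, In x L -> al <= fst (fst x) /\ snd x <= om) ->
  sumL (fun p t q => g q - g p) L <= g om - g al.
Proof.
  intros Hg. revert al. induction L as [|[[p t] q] r IH]; intros al H0 H1 H2 Hs HL; simpl in *.
  - assert (g al <= g om) by (apply Hg; lra). lra.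
  - destruct Hs as [Hpq [Hr Hs]]. destruct (HL _ (or_introl eq_refl)) as [Hp Hq]; simpl in *.
    assert (IH' := IH q ltac:(lra) ltac:(lra) H2 Hs ltac:(intros y Hy; split; [apply Hr; auto| apply HL; right; auto])).
    assert (g al <= g p) by (apply Hg; lra). lra.
Qed.

Definition pr2 (x : R*R*R) : R*R := (fst (fst x), snd x).

Lemma srt_intervals T L lo : srt L -> (forall x, In x L -> lo <= fst (fst x) /\ snd x <= T) ->
  intervals_ok T lo (map pr2 L).
Proof.
  revert lo. induction L as [|[[p t] q] r IH]; intros lo Hs HL; simpl in *; auto.
  destruct Hs as [Hpq [Hr Hs]]. destruct (HL _ (or_introl eq_refl)) as [Hp Hq]; simpl in *.
  repeat split; auto. apply IH; auto. intros y Hy. split; [apply Hr; auto| apply HL; right; auto].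
Qed.

Lemma sum_abs_incr_map u L : sum_abs_incr u (map pr2 L) = sumL (fun p t q => Rabs (u q - u p)) L.
Proof. induction L as [|x r IH]; simpl; auto. rewrite IH; auto. Qed.
Lemma sum_incr_map u L : Defs.sum_incr u (map pr2 L) = sumL (fun p t q => u q - u p) L.
Proof. induction L as [|x r IH]; simpl; auto. rewrite IH; auto. Qed.


Lemma ratio_bound V G l e : G <> 0 -> Rabs (V / G - l) < e -> Rabs V <= (Rabs l + e) * Rabs G.
Proof.
  intros HG H. replace V with ((V/G) * G) by (field; auto).
  rewrite Rabs_mult. apply Rmult_le_compat_r; [apply Rabs_pos|].
  assert (Rabs (V/G) <= Rabs l + Rabs (V/G - l)).
  { replace (V/G) with (l + (V/G - l)) at 1 by ring. apply Rabs_triang. } lra.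
Qed.

Lemma ac_single T g u : g_AC T g u -> forall e, 0 < e -> exists d, 0 < d /\
  forall p q, 0 <= p -> p < q -> q <= T -> g q - g p < d -> Rabs (u q - u p) < e.
Proof.
  intros Hac e He. destruct (Hac e He) as [d [Hd P]]. exists d; split; auto.
  intros p q H1 H2 H3 H4. specialize (P ((p,q)::nil)). simpl in P.
  assert (Rabs (u q - u p) + 0 < e); [|lra]. apply P; [repeat split; lra|lra].
Qed.

Lemma ac_const T g u p q : g_AC T g u -> 0 <= p -> p < q -> q <= T -> g p = g q -> u p = u q.
Proof.
  intros Hac H1 H2 H3 H4. destruct (Req_dec (u p) (u q)) as [|Hne]; auto. exfalso.
  assert (He : 0 < Rabs (u q - u p)) by (apply Rabs_pos_lt; lra).
  destruct (ac_single T g u Hac _ He) as [d [Hd P]].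
  specialize (P p q H1 H2 H3 ltac:(lra)). lra.
Qed.

Lemma bound_nat (f : R*R*R -> nat) (L : list (R*R*R)) : exists m, forall x, In x L -> (f x <= m)%nat.
Proof.
  induction L as [|y r [m IH]]; [exists 0%nat; intros x []|].
  exists (Nat.max (f y) m). intros x [<-|Hx]; [lia|]. specialize (IH x Hx); lia.
Qed.

Lemma sumL_filter_and F f h L :
  sumL F (filter f L) = sumL F (filter (fun x => f x && h x) L) + sumL F (filter (fun x => f x && negb (h x)) L).
Proof.
  induction L as [|x r IH]; simpl; [lra|]. destruct (f x); destruct (h x); simpl; rewrite IH; lra.
Qed.

Lemma geom_sum m : sum_f_R0 (fun n => (/2)^(S n)) m = 1 - (/2)^(S m).
Proof. induction m as [|m IH]; [simpl; field|].
  replace (sum_f_R0 (fun n => (/2)^(S n)) (S m)) with (sum_f_R0 (fun n => (/2)^(S n)) m + (/2)^(S (S m))) by reflexivity.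
  rewrite IH. simpl. field. Qed.

Lemma core T (g v : R -> R) (Ns : R -> Prop) a b M :
  0 <= a -> a <= b -> b <= T -> 0 <= M ->
  (forall s u, 0 <= s -> s <= u -> u <= T -> g s <= g u) ->
  (forall s, a <= s <= b -> cont_in T g s) ->
  g_AC T g v -> g_null T g Ns ->
  (forall t, a <= t <= b -> ~ Ns t -> exists l, Rabs l <= M /\ forall e, 0 < e -> exists d, 0 < d /\
     forall s, 0 <= s <= T -> Rabs (s - t) < d -> g s <> g t -> Rabs ((v s - v t)/(g s - g t) - l) < e) ->
  Rabs (v b - v a) <= M * (g b - g a).
Proof.
  intros Ha Hab HbT HM Hg Hcont Hac Hnull Hder.
  assert (Hgab : g a <= g b) by (apply Hg; lra).
  assert (Key : forall eps, 0 < eps -> Rabs (v b - v a) <= (M + eps) * (g b - g a) + eps).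
  { intros eps Heps.
    destruct (Hac eps Heps) as [del [Hdel Pac]].
    destruct (Hnull (del/4) ltac:(lra)) as [c [d [Hcd [Hcov Hsum]]]].
    pose (EP := fun n c' => c' < c n /\ (c n <= b -> forall s, a <= s -> s <= c n -> c' <= s ->
                  g (c n) - g s <= del/4 * (/2)^(S n))).
    assert (Enl : forall n, exists c', EP n c').
    { intro n. unfold EP.
      assert (Hpos : 0 < del/4 * (/2)^(S n)) by (apply Rmult_lt_0_compat; [lra| apply pow_lt; lra]).
      destruct (Rlt_or_le (c n) a) as [Hlt|Hle].
      - exists (c n - 1). split; [lra|]. intros _ s H1 H2. lra.
      - destruct (Rle_or_lt (c n) b) as [Hle2|Hgt].
        + destruct (Hcont (c n) ltac:(lra) _ Hpos) as [eta [Heta P]].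
          exists (c n - eta/2). split; [lra|]. intros _ s H1 H2 H3.
          assert (Rabs (s - c n) < eta) by (rabs; lra).
          specialize (P s ltac:(lra) H). revert P. rabs; lra.
        + exists (c n - 1). split; [lra|]. intros Hc; lra. }
    pose (cp := fun n => proj1_sig (constructive_indefinite_description _ (Enl n))).
    assert (Hcp : forall n, EP n (cp n)) by (intro n; exact (proj2_sig (constructive_indefinite_description _ (Enl n)))).
    pose (PG := fun t (pr : R * nat) => a <= t <= b -> 0 < fst pr /\
       ((Ns t /\ c (snd pr) <= t /\ cp (snd pr) <= t - fst pr /\ t + fst pr <= d (snd pr)) \/
        (~ Ns t /\ forall p q, a <= p -> p <= t -> t <= q -> q <= b -> t - fst pr < p -> q < t + fst pr ->
            Rabs (v q - v p) <= (M + eps) * (g q - g p)))).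
    assert (Gd : forall t, exists pr, PG t pr).
    { intro t. unfold PG. destruct (classic (a <= t <= b)) as [Ht|Ht]; [|exists (1, 0%nat); tauto].
      destruct (classic (Ns t)) as [HN|HN].
      - destruct (Hcov t HN) as [n Hn]. destruct (Hcp n) as [Hcpn _].
        assert (Hm1 := Rmin_l (t - cp n) (d n - t)). assert (Hm2 := Rmin_r (t - cp n) (d n - t)).
        assert (0 < Rmin (t - cp n) (d n - t)) by (apply Rmin_pos; lra).
        exists (Rmin (t - cp n) (d n - t), n). intros _. simpl.
        split; auto. left. split; auto. split; [lra|]. split; lra.
      - destruct (Hder t Ht HN) as [l [Hl Pd]]. destruct (Pd eps Heps) as [dd [Hdd Pdd]].
        exists (dd, 0%nat). intros _. simpl. split; auto. right. split; auto.
        intros p q H1 H2 H3 H4 H5 H6.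
        assert (A1 : Rabs (v q - v t) <= (M + eps) * (g q - g t)).
        { assert (g t <= g q) by (apply Hg; lra).
          destruct (Req_dec (g q) (g t)) as [Heq|Hne].
          - destruct (Rle_lt_or_eq_dec t q H3) as [Hlt| ->].
            + rewrite (ac_const T g v t q); auto; try lra. unfold Rminus. rewrite Rplus_opp_r, Rabs_R0. nra.
            + unfold Rminus. rewrite Rplus_opp_r, Rabs_R0. nra.
          - assert (Hs : Rabs (q - t) < dd) by (rabs; lra).
            assert (HH := ratio_bound (v q - v t) (g q - g t) _ _ ltac:(lra) (Pdd q ltac:(lra) Hs Hne)).
            rewrite (Rabs_right (g q - g t)) in HH by lra.
            eapply Rle_trans; [exact HH|]. apply Rmult_le_compat_r; lra. }
        assert (A2 : Rabs (v t - v p) <= (M + eps) * (g t - g p)).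
        { assert (g p <= g t) by (apply Hg; lra).
          destruct (Req_dec (g p) (g t)) as [Heq|Hne].
          - destruct (Rle_lt_or_eq_dec p t H2) as [Hlt| ->].
            + rewrite (ac_const T g v p t); auto; try lra. unfold Rminus. rewrite Rplus_opp_r, Rabs_R0. nra.
            + unfold Rminus. rewrite Rplus_opp_r, Rabs_R0. nra.
          - assert (Hs : Rabs (p - t) < dd) by (rabs; lra).
            assert (HH := ratio_bound (v p - v t) (g p - g t) _ _ ltac:(lra) (Pdd p ltac:(lra) Hs Hne)).
            rewrite (Rabs_left1 (g p - g t)) in HH by lra. rewrite Rabs_minus_sym.
            eapply Rle_trans; [exact HH|]. replace (- (g p - g t)) with (g t - g p) by ring.
            apply Rmult_le_compat_r; lra. }
        replace (v q - v p) with ((v q - v t) + (v t - v p)) by ring.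
        eapply Rle_trans; [apply Rabs_triang|]. lra. }
    pose (GG := fun t => proj1_sig (constructive_indefinite_description _ (Gd t))).
    assert (HGG : forall t, PG t (GG t)) by (intro t; exact (proj2_sig (constructive_indefinite_description _ (Gd t)))).
    unfold PG in HGG.
    pose (dl := fun t => fst (GG t)). pose (nt := fun t => snd (GG t)).
    destruct (cousin dl a b Hab) as [L HL].
    { intros t Ht. exact (proj1 (HGG t Ht)). }
    destruct (chain_bounds _ _ _ _ HL) as [_ HB].
    pose (isN := fun x : R*R*R => if excluded_middle_informative (Ns (snd (fst x))) then true else false).
    assert (Htel := chain_tele_abs dl v a b L HL).
    rewrite (sumL_filter_split _ isN L) in Htel.
    assert (P2b : sumL (fun p t q => Rabs (v q - v p)) (filter (fun x => negb (isN x)) L) <= (M + eps) * (g b - g a)).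
    { eapply Rle_trans.
      - apply (sumL_le _ (fun p t q => (M + eps) * (g q - g p))).
        intros [[p t] q] Hx. apply filter_In in Hx. destruct Hx as [Hx Hn]. simpl.
        unfold isN in Hn; simpl in Hn. destruct (excluded_middle_informative (Ns t)) as [|HN]; [discriminate|].
        destruct (HB _ Hx) as [? [? [? [? [? [? ?]]]]]]; simpl in *.
        destruct (HGG t ltac:(lra)) as [_ [[HN' _]|[_ P]]]; [contradiction|].
        apply P; auto.
      - rewrite <- (chain_tele dl g a b L HL), <- sumL_scal. apply sumL_filter_le.
        intros [[p t] q] Hx. simpl. destruct (HB _ Hx) as [? [? [? [? [? [? ?]]]]]]; simpl in *.
        assert (g p <= g q) by (apply Hg; lra). nra. }
    pose (B := fun n => g (d n) - g (c n) + del/4 * (/2)^(S n)).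
    pose (G := fun p t q : R => g q - g p).
    assert (Hsrt : forall f, srt (filter f L)) by (intro f; apply srt_filter; eapply chain_srt; eauto).
    assert (PerN : forall n f, (forall x, In x L -> f x = true -> Ns (snd (fst x)) /\ nt (snd (fst x)) = n) ->
               sumL G (filter f L) <= B n).
    { intros n f Hf.
      assert (HBn : 0 <= B n).
      { unfold B. destruct (Hcd n) as [? [? ?]]. assert (g (c n) <= g (d n)) by (apply Hg; lra).
        assert (0 < (/2)^(S n)) by (apply pow_lt; lra). nra. }
      assert (Hel : forall x, In x (filter f L) -> cp n < fst (fst x) /\ snd x < d n /\ c n <= b /\
                   a <= fst (fst x) /\ snd x <= b /\ fst (fst x) < snd x).
      { intros [[p t] q] Hx. apply filter_In in Hx. destruct Hx as [Hx Hfx]. simpl.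
        destruct (Hf _ Hx Hfx) as [HN Hn]; simpl in *.
        destruct (HB _ Hx) as [? [? [? [? [? [? ?]]]]]]; simpl in *.
        destruct (HGG t ltac:(lra)) as [_ [[_ [Hq1 [Hq2 Hq3]]]|[HN' _]]]; [|contradiction].
        unfold dl, nt in *. rewrite Hn in *. repeat split; lra. }
      destruct (filter f L) as [|x0 r] eqn:Hfl; [simpl; lra|].
      rewrite <- Hfl in *.
      destruct (Hel x0 ltac:(rewrite Hfl; left; auto)) as [H1 [H2 [H3 [H4 [H5 H6]]]]].
      destruct (Hcd n) as [Hc0 [Hcd' HdT]].
      set (al := Rmax (cp n) a). set (om := Rmin (d n) b).
      assert (Hal1 := Rmax_l (cp n) a). assert (Hal2 := Rmax_r (cp n) a).
      assert (Hom1 := Rmin_l (d n) b). assert (Hom2 := Rmin_r (d n) b).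
      fold al in Hal1, Hal2. fold om in Hom1, Hom2.
      assert (Hal3 : al <= fst (fst x0)) by (apply Rmax_lub; lra).
      assert (Hom3 : snd x0 <= om) by (apply Rmin_glb; lra).
      assert (Htel2 : sumL G (filter f L) <= g om - g al).
      { apply (srt_tele T); auto; try lra. intros x Hx. destruct (Hel x Hx) as [? [? [? [? [? ?]]]]].
        split; [apply Rmax_lub|apply Rmin_glb]; lra. }
      assert (g om <= g (d n)) by (apply Hg; lra).
      assert (g (c n) - g al <= del/4 * (/2)^(S n)).
      { destruct (Rle_or_lt a (c n)) as [Hac'|Hca].
        - destruct (Hcp n) as [Hcpn Pn]. apply Pn; auto.
          + apply Rmax_lub; lra.
        - assert (g (c n) <= g al) by (apply Hg; lra).
          assert (0 < (/2)^(S n)) by (apply pow_lt; lra). nra. }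
      unfold B. lra. }
    assert (Group : forall m f, (forall x, In x L -> f x = true -> Ns (snd (fst x)) /\ (nt (snd (fst x)) <= m)%nat) ->
               sumL G (filter f L) <= sum_f_R0 B m).
    { intro m. induction m as [|m IH]; intros f Hf.
      - simpl. apply (PerN 0%nat f). intros x Hx Hfx. destruct (Hf x Hx Hfx). split; auto; lia.
      - rewrite (sumL_filter_and G f (fun x => Nat.leb (nt (snd (fst x))) m)). simpl.
        apply Rplus_le_compat.
        + apply IH. intros x Hx Hfx. apply andb_prop in Hfx. destruct Hfx as [Hfx Hle].
          apply Nat.leb_le in Hle. destruct (Hf x Hx Hfx); split; auto.
        + apply (PerN (S m)). intros x Hx Hfx. apply andb_prop in Hfx. destruct Hfx as [Hfx Hle].
          apply Bool.negb_true_iff, Nat.leb_gt in Hle. destruct (Hf x Hx Hfx); split; auto; lia. }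
    destruct (bound_nat (fun x => nt (snd (fst x))) L) as [m Hm].
    assert (HN1 : sumL G (filter isN L) <= sum_f_R0 B m).
    { apply Group. intros [[p t] q] Hx Hfx. unfold isN in Hfx; simpl in *.
      destruct (excluded_middle_informative (Ns t)); [|discriminate]. split; auto. apply (Hm _ Hx). }
    assert (HBsum : sum_f_R0 B m <= del/2).
    { unfold B. rewrite sum_plus.
      assert (E1 : sum_f_R0 (fun n => del/4 * (/2)^(S n)) m = del/4 * sum_f_R0 (fun n => (/2)^(S n)) m).
      { rewrite scal_sum. apply sum_eq. intros; ring. }
      rewrite E1, geom_sum. assert (0 < (/2)^(S m)) by (apply pow_lt; lra).
      specialize (Hsum m). assert (0 < del/4 * (/2)^(S m)) by (apply Rmult_lt_0_compat; lra). lra. }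
    assert (HP1 : sumL (fun p t q => Rabs (v q - v p)) (filter isN L) < eps).
    { rewrite <- sum_abs_incr_map. apply Pac.
      - apply srt_intervals; auto. intros [[p t] q] Hx. apply filter_In in Hx. destruct Hx as [Hx _].
        destruct (HB _ Hx) as [? [? [? [? [? [? ?]]]]]]; simpl in *. split; lra.
      - rewrite sum_incr_map. unfold G in HN1. lra. }
    lra. }
  apply Rnot_gt_le; intro Hc.
  set (D := Rabs (v b - v a) - M * (g b - g a)).
  assert (HD : 0 < D) by (unfold D; lra).
  set (eps := D / (2 * (g b - g a + 1))).
  assert (Heps : 0 < eps) by (unfold eps; apply Rdiv_lt_0_compat; lra).
  specialize (Key eps Heps).
  assert (E : eps * (g b - g a + 1) = D / 2) by (unfold eps; field; lra).
  unfold D in *. nra.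
Qed.


Definition grid (h s : R) : Prop := exists j : nat, s = INR j * h.

Lemma nongrid k h s : 0 < h -> INR k * h < s < INR (S k) * h -> ~ grid h s.
Proof.
  intros Hh Hs [j ->].
  assert (H1 : INR k < INR j) by (apply Rmult_lt_reg_r with h; lra).
  assert (H2 : INR j < INR (S k)) by (apply Rmult_lt_reg_r with h; lra).
  apply INR_lt in H1. apply INR_lt in H2. lia.
Qed.

Lemma cont_rlim T phi s : cont_in T phi s -> 0 <= s < T -> is_rlim phi s (phi s).
Proof.
  intros Hc Hs e He. destruct (Hc e He) as [d [Hd P]].
  exists (Rmin d (T - s)). split; [apply Rmin_pos; lra|].
  intros s' Hs'. assert (Hm1 := Rmin_l d (T - s)). assert (Hm2 := Rmin_r d (T - s)).
  apply P; [lra|]. rabs; lra.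
Qed.

Lemma fsum_perm (a : R -> R) L L' : Permutation L L' -> fsum L a = fsum L' a.
Proof.
  induction 1; simpl; auto.
  - rewrite IHPermutation; auto.
  - ring.
  - congruence.
Qed.

Lemma jp_value T h k phi t :
  0 < h -> INR (S k) * h <= T ->
  (forall s, 0 <= s < T -> ~ grid h s -> is_rlim phi s (phi s)) ->
  INR k * h < t <= INR (S k) * h ->
  jump_part phi t = fsum (filter (fun s => if Req_dec_T (jump phi s) 0 then false else true)
                          (map (fun j => INR j * h) (seq 0 (S k)))) (jump phi).
Proof.
  intros Hh HT Hr Ht.
  set (L0 := filter _ _).
  assert (Hk0 : 0 <= INR k) by apply pos_INR.
  assert (HSk : INR (S k) = INR k + 1) by (rewrite S_INR; auto).
  assert (Hmem : forall s, In s L0 <-> (0 <= s < t /\ jump phi s <> 0)).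
  { intro s. unfold L0. rewrite filter_In, in_map_iff. split.
    - intros [[j [<- Hj]] Hjump]. apply in_seq in Hj.
      destruct (Req_dec_T (jump phi (INR j * h)) 0); [discriminate|]. split; auto.
      assert (INR j <= INR k) by (apply le_INR; lia). split; [apply Rmult_le_pos; [apply pos_INR|lra]|nra].
    - intros [[Hs0 Hst] Hj]. split.
      + destruct (classic (grid h s)) as [[j ->]|Hng].
        * exists j. split; auto. apply in_seq. split; [lia|].
          assert (INR j < INR (S k)) by (apply Rmult_lt_reg_r with h; lra). apply INR_lt in H. lia.
        * exfalso. apply Hj. unfold jump. rewrite (rlim_eq phi s (phi s)); [ring|]. apply Hr; auto. lra.
      + destruct (Req_dec_T (jump phi s) 0); [contradiction|auto]. }
  assert (HND : NoDup L0).
  { apply NoDup_filter. apply Injective_map_NoDup; [|apply seq_NoDup].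
    intros i j Hij. apply INR_eq. apply Rmult_eq_reg_r with h; lra. }
  assert (Hjs : is_jump_sum phi t (fsum L0 (jump phi))) by (exists L0; auto).
  unfold jump_part.
  assert (Hsp : is_jump_sum phi t (epsilon (inhabits 0) (fun S => is_jump_sum phi t S))).
  { apply epsilon_spec. exists (fsum L0 (jump phi)); auto. }
  destruct Hsp as [L1 [HN1 [Hm1 ->]]].
  apply fsum_perm. apply NoDup_Permutation; auto. intro s. rewrite Hm1, Hmem. tauto.
Qed.

Lemma cont_part_diff T h k phi t t' :
  0 < h -> INR (S k) * h <= T ->
  (forall s, 0 <= s < T -> ~ grid h s -> is_rlim phi s (phi s)) ->
  INR k * h < t <= INR (S k) * h -> INR k * h < t' <= INR (S k) * h ->
  cont_part phi t - cont_part phi t' = phi t - phi t'.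
Proof.
  intros. unfold cont_part. rewrite (jp_value T h k phi t), (jp_value T h k phi t'); auto. ring.
Qed.


Lemma lip_x (F dF : R -> R) K : (forall c, derivable_pt_lim F c (dF c)) -> (forall c, Rabs (dF c) < K) ->
  forall y z, Rabs (F y - F z) <= K * Rabs (y - z).
Proof.
  intros Hd Hb.
  assert (Hmain : forall y z, y < z -> Rabs (F z - F y) <= K * (z - y)).
  { intros y z Hyz. destruct (MVT_cor2 F dF y z Hyz (fun c _ => Hd c)) as [c [Hc _]].
    rewrite Hc, Rabs_mult, (Rabs_right (z - y)) by lra.
    apply Rmult_le_compat_r; [lra|]. specialize (Hb c); lra. }
  intros y z. destruct (Rtotal_order y z) as [Hl|[->|Hg]].
  - rewrite Rabs_minus_sym, (Rabs_minus_sym y z), (Rabs_right (z - y)) by lra. apply Hmain; auto.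
  - unfold Rminus; rewrite !Rplus_opp_r, !Rabs_R0. lra.
  - rewrite (Rabs_right (y - z)) by lra. apply Hmain; auto.
Qed.

Lemma sum_abs_combo T (g x : R -> R) c l lo : 0 <= lo ->
  (forall s u, 0 <= s -> s <= u -> u <= T -> g s <= g u) ->
  intervals_ok T lo l ->
  sum_abs_incr (fun s => x s - c * g s) l <= sum_abs_incr x l + Rabs c * Defs.sum_incr g l.
Proof.
  intros H0 Hg. revert lo H0. induction l as [|[p q] r IH]; intros lo H0 Hl; simpl in *; [lra|].
  destruct Hl as [H1 [H2 [H3 H4]]].
  specialize (IH q ltac:(lra) H4).
  assert (g p <= g q) by (apply Hg; lra).
  assert (Rabs (x q - c * g q - (x p - c * g p)) <= Rabs (x q - x p) + Rabs c * (g q - g p)).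
  { replace (x q - c * g q - (x p - c * g p)) with ((x q - x p) + - (c * (g q - g p))) by ring.
    eapply Rle_trans; [apply Rabs_triang|]. rewrite Rabs_Ropp, Rabs_mult, (Rabs_right (g q - g p)) by lra. lra. }
  lra.
Qed.

Lemma ac_combo T (g x : R -> R) c :
  (forall s u, 0 <= s -> s <= u -> u <= T -> g s <= g u) ->
  g_AC T g x -> g_AC T g (fun s => x s - c * g s).
Proof.
  intros Hg Hac e He. destruct (Hac (e/2) ltac:(lra)) as [d [Hd P]].
  set (K := e / (2 * (Rabs c + 1))).
  assert (HK : 0 < K) by (unfold K; apply Rdiv_lt_0_compat; [lra| generalize (Rabs_pos c); lra]).
  assert (HK2 : K * (Rabs c + 1) = e / 2) by (unfold K; field; generalize (Rabs_pos c); lra).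
  exists (Rmin d K). split; [apply Rmin_pos; lra|].
  intros l Hl Hs. assert (Hm1 := Rmin_l d K). assert (Hm2 := Rmin_r d K).
  assert (Hc := sum_abs_combo T g x c l 0 ltac:(lra) Hg Hl).
  assert (Px := P l Hl ltac:(lra)).
  assert (Rabs c * Defs.sum_incr g l <= Rabs c * K) by (apply Rmult_le_compat_l; [apply Rabs_pos|lra]).
  assert (Rabs c * K < e / 2) by nra.
  lra.
Qed.

Lemma ac_rlim T (g x : R -> R) t L : g_AC T g x -> 0 <= t < T -> is_rlim g t L ->
  exists l, is_rlim x t l.
Proof.
  intros Hac Ht HL. apply rcauchy_lim. intros e He.
  destruct (ac_single T g x Hac e He) as [d [Hd P]].
  destruct (HL (d/2) ltac:(lra)) as [eta [Heta Pe]].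
  exists (Rmin eta (T - t)). split; [apply Rmin_pos; lra|].
  assert (Hm1 := Rmin_l eta (T - t)). assert (Hm2 := Rmin_r eta (T - t)).
  intros s s' Hs Hs'.
  assert (A1 := Pe s ltac:(lra)). assert (A2 := Pe s' ltac:(lra)).
  destruct (Rtotal_order s s') as [Hl|[<-|Hg]].
  - rewrite Rabs_minus_sym. apply P; try lra. revert A1 A2. rabs; lra.
  - unfold Rminus; rewrite Rplus_opp_r, Rabs_R0; lra.
  - apply P; try lra. revert A1 A2. rabs; lra.
Qed.

Lemma ac_left T (g x : R -> R) b : g_AC T g x -> 0 < b <= T -> left_cont_on T g ->
  forall e, 0 < e -> exists dl, 0 < dl /\ forall s, 0 <= s -> b - dl < s <= b -> Rabs (x s - x b) < e.
Proof.
  intros Hac Hb Hl e He. destruct (ac_single T g x Hac e He) as [d [Hd P]].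
  destruct (Hl b Hb d Hd) as [dl [Hdl Pl]]. exists dl. split; auto.
  intros s Hs0 Hs. destruct (Rle_lt_or_eq_dec s b (proj2 Hs)) as [Hlt| ->].
  - rewrite Rabs_minus_sym. apply P; try lra. specialize (Pl s Hs0 Hs). revert Pl. rabs; lra.
  - unfold Rminus; rewrite Rplus_opp_r, Rabs_R0; lra.
Qed.

Lemma limit_ineq (x g : R -> R) tk tk1 xkp L c M : tk < tk1 -> 0 <= M ->
  is_rlim x tk xkp -> is_rlim g tk L ->
  (forall e, 0 < e -> exists dl, 0 < dl /\ forall s, tk1 - dl < s < tk1 -> Rabs (x s - x tk1) < e /\ Rabs (g s - g tk1) < e) ->
  (forall a b, tk < a < b -> b < tk1 -> Rabs (x b - x a - c * (g b - g a)) <= M * (g b - g a)) ->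
  Rabs (x tk1 - xkp - c * (g tk1 - L)) <= M * (g tk1 - L).
Proof.
  intros Htk HM Hx Hg Hleft Hab.
  apply Rnot_gt_le; intro Hc.
  set (D := Rabs (x tk1 - xkp - c * (g tk1 - L)) - M * (g tk1 - L)).
  assert (HD : 0 < D) by (unfold D; lra).
  assert (Hcp := Rabs_pos c).
  set (eta := D / (4 * (1 + Rabs c + M))).
  assert (Heta : 0 < eta) by (unfold eta; apply Rdiv_lt_0_compat; lra).
  assert (Heta2 : eta * (4 * (1 + Rabs c + M)) = D) by (unfold eta; field; lra).
  destruct (Hx eta Heta) as [d1 [Hd1 P1]]. destruct (Hg eta Heta) as [d2 [Hd2 P2]].
  destruct (Hleft eta Heta) as [d3 [Hd3 P3]].
  set (r := (tk1 - tk) / 2).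
  assert (Hda1 := Rmin_l (Rmin d1 d2) r). assert (Hda2 := Rmin_r (Rmin d1 d2) r).
  assert (Hd12 := Rmin_l d1 d2). assert (Hd12' := Rmin_r d1 d2).
  assert (Hdb1 := Rmin_l d3 r). assert (Hdb2 := Rmin_r d3 r).
  assert (Hdap : 0 < Rmin (Rmin d1 d2) r) by (repeat apply Rmin_pos; unfold r; lra).
  assert (Hdbp : 0 < Rmin d3 r) by (repeat apply Rmin_pos; unfold r; lra).
  set (da := Rmin (Rmin d1 d2) r) in *. set (db := Rmin d3 r) in *.
  set (a := tk + da / 2). set (b := tk1 - db / 2).
  assert (Hr : r = (tk1 - tk)/2) by reflexivity.
  assert (Hab' : tk < a < b) by (unfold a, b; lra).
  assert (Hb' : b < tk1) by (unfold b; lra).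
  specialize (Hab a b Hab' Hb').
  destruct (P3 b ltac:(unfold b; lra)) as [E1 E3].
  assert (E2 := P1 a ltac:(unfold a; lra)). assert (E4 := P2 a ltac:(unfold a; lra)).
  revert Hab E1 E2 E3 E4. generalize (x a) (x b) (g a) (g b). intros xa xb ga gb Hab E1 E2 E3 E4.
  set (X0 := x tk1 - xkp - c * (g tk1 - L)) in *.
  assert (HX : Rabs X0 <= Rabs (xb - xa - c * (gb - ga)) + Rabs (xb - x tk1) + Rabs (xa - xkp) + Rabs c * (Rabs (gb - g tk1) + Rabs (ga - L))).
  { replace X0 with ((xb - xa - c * (gb - ga)) - (xb - x tk1) + (xa - xkp) + c * ((gb - g tk1) - (ga - L))) by (unfold X0; ring).
    eapply Rle_trans; [apply Rabs_triang|]. rewrite Rabs_mult.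
    assert (Rabs (gb - g tk1 - (ga - L)) <= Rabs (gb - g tk1) + Rabs (ga - L)).
    { eapply Rle_trans; [apply Rabs_triang|]. rewrite Rabs_Ropp; lra. }
    assert (Rabs c * Rabs (gb - g tk1 - (ga - L)) <= Rabs c * (Rabs (gb - g tk1) + Rabs (ga - L))) by (apply Rmult_le_compat_l; lra).
    assert (Rabs (xb - xa - c * (gb - ga) - (xb - x tk1) + (xa - xkp)) <= Rabs (xb - xa - c * (gb - ga)) + Rabs (xb - x tk1) + Rabs (xa - xkp)).
    { eapply Rle_trans; [apply Rabs_triang|]. 
      assert (Rabs (xb - xa - c * (gb - ga) - (xb - x tk1)) <= Rabs (xb - xa - c * (gb - ga)) + Rabs (xb - x tk1)).
      { unfold Rminus at 1. eapply Rle_trans; [apply Rabs_triang|]. rewrite Rabs_Ropp; lra. }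
      lra. }
    lra. }
  assert (Rabs c * (Rabs (gb - g tk1) + Rabs (ga - L)) <= Rabs c * (2 * eta)) by (apply Rmult_le_compat_l; lra).
  assert (M * (gb - ga) <= M * (g tk1 - L) + M * (2 * eta)).
  { assert (gb - ga <= g tk1 - L + 2 * eta) by (revert E3 E4; rabs; lra). nra. }
  unfold D in Heta2. fold X0 in Heta2. nra.
Qed.


Lemma glip_cont T g u H s : 0 < H -> g_lipschitz T g u H -> cont_in T g s -> 0 <= s <= T -> cont_in T u s.
Proof.
  intros HH Hl Hc Hs e He. destruct (Hc (e / H) ltac:(apply Rdiv_lt_0_compat; lra)) as [d [Hd P]].
  exists d. split; auto. intros s' Hs' Hd'. specialize (P s' Hs' Hd').
  specialize (Hl s' s Hs' Hs).
  assert (H * Rabs (g s' - g s) < H * (e / H)) by (apply Rmult_lt_compat_l; auto).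
  replace (H * (e / H)) with e in H0 by (field; lra). lra.
Qed.

Theorem mainTheorem8 (T h H K2 K3 x0 : R) (N : nat) (g : R -> R)
  (f : R -> R -> R) (df dfp : R -> R -> R) (x : R -> R) :
  0 < T ->
  (* g : [0,T] -> [0,oo) increasing, left-continuous, continuous at 0 *)
  (forall t, 0 <= t <= T -> 0 <= g t) ->
  (forall s t, 0 <= s -> s <= t -> t <= T -> g s <= g t) ->
  left_cont_on T g ->
  cont_in T g 0 ->
  (* (H4) uniform grid t_k = k h, t_{N+1} = T, D_g contained in {t_1..t_N} *)
  0 < h ->
  T = INR (S N) * h ->
  (forall t, Dg T g t -> exists k, (1 <= k <= N)%nat /\ t = INR k * h) ->
  (* (H5) *)
  0 < H ->
  g_lipschitz T g (fun t => f t (x t)) H ->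
  lipschitz T (cont_part (fun t => f t (x t))) H ->
  lipschitz T (cont_part g) H ->
  (* (H6) *)
  (forall c, (exists M, forall t, 0 <= t <= T -> Rabs (f t c) <= M) /\
             g_cont T g (fun t => f t c)) ->
  (* (H7) df t = d/dx f(t, .) *)
  (forall t c, 0 <= t <= T -> derivable_pt_lim (f t) c (df t c)) ->
  (forall t, 0 <= t <= T -> continuity (df t)) ->
  (forall t c, 0 <= t <= T -> Rabs (df t c) < K2) ->
  (* (H8) dfp t = d/dx f(t^+, .) *)
  (forall t c, 0 <= t < T -> exists l, is_rlim (fun s => f s c) t l) ->
  (forall t c, 0 <= t < T ->
     derivable_pt_lim (fun y => rlim (fun s => f s y) t) c (dfp t c)) ->
  (forall t, 0 <= t < T -> continuity (dfp t)) ->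
  (forall t c, 0 <= t < T -> Rabs (dfp t c) < K3) ->
  (* x is the solution *)
  is_g_solution T g f x0 x ->
  forall k : nat, (k <= N)%nat ->
    let tk := INR k * h in
    let tk1 := INR (S k) * h in
    let xk1 := x tk1 in
    let xkp := rlim x tk in
    let fkp := rlim (fun s => f s xkp) tk in
    let dG := g tk1 - rlim g tk in
    let sigma_star := xk1 - xkp - fkp * dG in
    let sigma := xk1 - xkp - / 2 * (fkp + f tk1 xk1) * dG in
    let xstar := xk1 - sigma_star in
    let tau := xk1 - xkp - / 2 * (fkp + f tk1 xstar) * dG in
    Rabs sigma_star <= H ^ 2 * h ^ 2 /\
    Rabs sigma <= / 2 * H ^ 2 * h ^ 2 /\
    Rabs tau <= / 2 * H ^ 2 * h ^ 2 + / 2 * K2 * H ^ 3 * h ^ 3.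
Proof.
  intros HT Hg0 Hg Hlc Hc0 Hh HTN HDg HH Hgl HlipC HlipG H6 H7a H7b H7c H8a H8b H8c H8d Hsol k Hk.
  intros tk tk1 xk1 xkp fkp dG sigma_star sigma xstar tau.
  destruct Hsol as [_ [Hac [Ns [Hnull Hder]]]].
  assert (Hk0 : 0 <= INR k) by apply pos_INR.
  assert (HSk : INR (S k) = INR k + 1) by (rewrite S_INR; auto).
  assert (HkN : INR (S k) <= INR (S N)) by (apply le_INR; lia).
  assert (Htk0 : 0 <= tk) by (unfold tk; apply Rmult_le_pos; lra).
  assert (Htk1 : tk1 = tk + h) by (unfold tk1, tk; rewrite HSk; ring).
  assert (Htk1T : tk1 <= T) by (rewrite HTN; unfold tk1; apply Rmult_le_compat_r; lra).
  assert (HnotDg : forall s, 0 <= s <= T -> ~ grid h s -> cont_in T g s).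
  { intros s Hs Hng. apply NNPP. intro Hnc. destruct (HDg s (conj Hs Hnc)) as [j [_ Hj]].
    apply Hng. exists j; auto. }
  assert (Hng : forall s, tk < s < tk1 -> ~ grid h s) by (intros s Hs; apply (nongrid k h s Hh Hs)).
  set (fs := fun t => f t (x t)) in *.
  assert (HrlG : forall s, 0 <= s < T -> ~ grid h s -> is_rlim g s (g s)).
  { intros s Hs Hn. apply (cont_rlim T); auto. apply HnotDg; auto; lra. }
  assert (HrlF : forall s, 0 <= s < T -> ~ grid h s -> is_rlim fs s (fs s)).
  { intros s Hs Hn. apply (cont_rlim T); auto. apply (glip_cont T g fs H s HH Hgl); [apply HnotDg|]; auto; lra. }
  assert (HTk : INR (S k) * h <= T) by (fold tk1; lra).
  assert (LipF : forall t t', tk < t <= tk1 -> tk < t' <= tk1 -> Rabs (fs t - fs t') <= H * Rabs (t - t')).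
  { intros t t' Ht Ht'. rewrite <- (cont_part_diff T h k fs t t'); auto. apply HlipC; lra. }
  assert (LipG : forall t t', tk < t <= tk1 -> tk < t' <= tk1 -> Rabs (g t - g t') <= H * Rabs (t - t')).
  { intros t t' Ht Ht'. rewrite <- (cont_part_diff T h k g t t'); auto. apply HlipG; lra. }
  destruct (mono_rlim T g tk ltac:(lra) Hg) as [L [HL [HL1 HL2]]].
  assert (HdG : dG = g tk1 - L) by (unfold dG; rewrite (rlim_eq g tk L HL); auto).
  assert (HdG0 : 0 <= dG) by (rewrite HdG; specialize (HL2 tk1 ltac:(lra)); lra).
  assert (HdGh : dG <= H * h).
  { rewrite HdG. apply Rnot_gt_le; intro Hc.
    destruct (HL (g tk1 - L - H * h) ltac:(lra)) as [d [Hd P]].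
    set (s := tk + Rmin d h / 2).
    assert (Hm1 := Rmin_l d h). assert (Hm2 := Rmin_r d h). assert (0 < Rmin d h) by (apply Rmin_pos; lra).
    specialize (P s ltac:(unfold s; lra)).
    assert (Hl := LipG tk1 s ltac:(lra) ltac:(unfold s; lra)).
    rewrite (Rabs_right (tk1 - s)) in Hl by (unfold s; lra).
    assert (H * (tk1 - s) <= H * h) by (apply Rmult_le_compat_l; unfold s; lra).
    revert P Hl. rabs; lra. }

  destruct (ac_rlim T g x tk L Hac ltac:(lra) HL) as [lx Hlx].
  assert (Hxr : is_rlim x tk xkp) by (unfold xkp; rewrite (rlim_eq x tk lx Hlx); auto).
  destruct (H8a tk xkp ltac:(lra)) as [lf Hlf].
  assert (Hfr : is_rlim (fun s => f s xkp) tk fkp) by (unfold fkp; rewrite (rlim_eq _ tk lf Hlf); auto).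
  assert (LipX : forall s y z, 0 <= s <= T -> Rabs (f s y - f s z) <= K2 * Rabs (y - z)).
  { intros s y z Hs. apply (lip_x (f s) (df s)); intros; auto. }
  assert (HK2 : 0 <= K2) by (specialize (H7c 0 0 ltac:(lra)); generalize (Rabs_pos (df 0 0)); lra).
  assert (Hfsb : forall s, tk < s <= tk1 -> Rabs (fs s - fkp) <= H * (s - tk)).
  { intros s Hs. apply Rnot_gt_le; intro Hc.
    set (D := Rabs (fs s - fkp) - H * (s - tk)).
    assert (HD : 0 < D) by (unfold D; lra).
    assert (He1 : 0 < D / (3 * (K2 + 1))) by (apply Rdiv_lt_0_compat; lra).
    destruct (Hxr _ He1) as [d1 [Hd1 P1]].
    destruct (Hfr (D/3) ltac:(lra)) as [d2 [Hd2 P2]].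
    set (m := Rmin (Rmin d1 d2) (s - tk)).
    assert (Hm1 := Rmin_l (Rmin d1 d2) (s - tk)). assert (Hm2 := Rmin_r (Rmin d1 d2) (s - tk)).
    assert (Hm3 := Rmin_l d1 d2). assert (Hm4 := Rmin_r d1 d2).
    assert (Hm0 : 0 < Rmin (Rmin d1 d2) (s - tk)) by (repeat apply Rmin_pos; lra).
    fold m in Hm1, Hm2, Hm0.
    set (s' := tk + m / 2).
    specialize (P1 s' ltac:(unfold s'; lra)). specialize (P2 s' ltac:(unfold s'; lra)). simpl in P2.
    assert (A1 := LipF s s' ltac:(lra) ltac:(unfold s'; lra)).
    rewrite (Rabs_right (s - s')) in A1 by (unfold s'; lra).
    assert (A2 := LipX s' (x s') xkp ltac:(unfold s'; lra)).
    assert (K2 * Rabs (x s' - xkp) <= K2 * (D / (3 * (K2 + 1)))) by (apply Rmult_le_compat_l; lra).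
    assert (K2 * (D / (3 * (K2 + 1))) <= D / 3).
    { apply Rmult_le_reg_r with (3 * (K2 + 1)); [lra|].
      replace (K2 * (D / (3 * (K2 + 1))) * (3 * (K2 + 1))) with (K2 * D) by (field; lra).
      replace (D / 3 * (3 * (K2 + 1))) with (D * K2 + D) by field. nra. }
    assert (H * (s - s') <= H * (s - tk)) by (apply Rmult_le_compat_l; unfold s'; lra).
    assert (Rabs (fs s - fkp) <= Rabs (fs s - fs s') + Rabs (f s' (x s') - f s' xkp) + Rabs (f s' xkp - fkp)).
    { replace (fs s - fkp) with ((fs s - fs s') + (f s' (x s') - f s' xkp) + (f s' xkp - fkp)) by (unfold fs; ring).
      eapply Rle_trans; [apply Rabs_triang|]. apply Rplus_le_compat_r. apply Rabs_triang. }
    unfold D in *. lra. }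

  assert (Hleft : forall e, 0 < e -> exists dl, 0 < dl /\ forall s, tk1 - dl < s < tk1 -> Rabs (x s - x tk1) < e /\ Rabs (g s - g tk1) < e).
  { intros e He. destruct (ac_left T g x tk1 Hac ltac:(lra) Hlc e He) as [d1 [Hd1 P1]].
    destruct (Hlc tk1 ltac:(lra) e He) as [d2 [Hd2 P2]].
    assert (Hm1 := Rmin_l (Rmin d1 d2) tk1). assert (Hm2 := Rmin_r (Rmin d1 d2) tk1).
    assert (Hm3 := Rmin_l d1 d2). assert (Hm4 := Rmin_r d1 d2).
    exists (Rmin (Rmin d1 d2) tk1). split; [repeat apply Rmin_pos; lra|].
    intros s Hs. split; [apply P1|apply P2]; lra. }
  assert (Hcore : forall c M, 0 <= M -> (forall s, tk < s < tk1 -> Rabs (fs s - c) <= M) -> Rabs (xk1 - xkp - c * dG) <= M * dG).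
  { intros c M HM Hb. rewrite HdG. unfold xk1.
    apply (limit_ineq x g tk tk1 xkp L c M); auto; [lra|].
    intros a b Hab Hb1.
    replace (x b - x a - c * (g b - g a)) with ((x b - c * g b) - (x a - c * g a)) by ring.
    apply (core T g (fun s => x s - c * g s) Ns a b M); try lra; auto.
    - intros s Hs. apply HnotDg; [lra|]. apply Hng; lra.
    - apply ac_combo; auto.
    - intros t Ht HN. destruct (Hder t ltac:(lra) HN) as [_ Hd2].
      assert (HnD : ~ Dg T g t) by (intros [_ Hnc]; apply Hnc; apply HnotDg; [lra|apply Hng; lra]).
      exists (fs t - c). split; [apply Hb; lra|].
      intros e He. destruct (Hd2 HnD e He) as [d [Hd P]]. exists d. split; auto.
      intros s Hs Hsd Hgs. specialize (P s Hs Hsd Hgs).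
      replace ((x s - c * g s - (x t - c * g t)) / (g s - g t) - (fs t - c)) with ((x s - x t) / (g s - g t) - f t (x t)) by (unfold fs; field; intro Hz; apply Hgs; lra).
      exact P. }
  assert (HS1 : Rabs sigma_star <= (H * h) * dG).
  { unfold sigma_star. apply Hcore; [nra|]. intros s Hs. assert (Hb := Hfsb s ltac:(lra)).
    assert (H * (s - tk) <= H * h) by (apply Rmult_le_compat_l; lra). lra. }
  assert (HS2 : Rabs sigma <= (/2 * (H * h)) * dG).
  { unfold sigma. replace (/ 2 * (fkp + f tk1 xk1) * dG) with ((/2 * (fkp + fs tk1)) * dG) by (unfold fs, xk1; cbv beta; match goal with |- ?G => idtac G end; ring).
    apply Hcore; [nra|]. intros s Hs.
    assert (A1 := Hfsb s ltac:(lra)). assert (A2 := LipF tk1 s ltac:(lra) ltac:(lra)).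
    rewrite (Rabs_right (tk1 - s)) in A2 by lra.
    replace (fs s - / 2 * (fkp + fs tk1)) with (/2 * (fs s - fkp) + - (/2 * (fs tk1 - fs s))) by (unfold fs; cbv beta; field).
    eapply Rle_trans; [apply Rabs_triang|]. rewrite Rabs_Ropp, !Rabs_mult, (Rabs_right (/2)) by lra.
    assert (H * (s - tk) + H * (tk1 - s) = H * h) by (rewrite Htk1; ring).
    lra. }
  assert (Hhh : H * h * dG <= (H*h) * (H*h)) by (apply Rmult_le_compat_l; [nra|lra]).
  split; [|split].
  - replace (H^2*h^2) with ((H*h)*(H*h)) by ring. lra.
  - replace (/2 * H^2*h^2) with (/2*((H*h)*(H*h))) by ring. lra.
  - assert (Htau : tau = sigma + /2 * (f tk1 xk1 - f tk1 xstar) * dG) by (unfold tau, sigma; ring).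
    assert (Hdx : xk1 - xstar = sigma_star) by (unfold xstar; ring).
    assert (A := LipX tk1 xk1 xstar ltac:(lra)). rewrite Hdx in A.
    rewrite Htau. eapply Rle_trans; [apply Rabs_triang|].
    rewrite !Rabs_mult, (Rabs_right (/2)) by lra. rewrite (Rabs_right dG) by lra.
    assert (B1 : Rabs (f tk1 xk1 - f tk1 xstar) <= K2 * ((H*h)*(H*h))).
    { eapply Rle_trans; [exact A|]. apply Rmult_le_compat_l; lra. }
    assert (B2 : Rabs (f tk1 xk1 - f tk1 xstar) * dG <= (K2 * ((H*h)*(H*h))) * (H*h)).
    { apply Rmult_le_compat; auto; apply Rabs_pos. }
    replace (/2 * H^2*h^2 + /2 * K2 * H^3 * h^3) with (/2*((H*h)*(H*h)) + /2 * ((K2 * ((H*h)*(H*h))) * (H*h))) by ring.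
    lra.
Qed.
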